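(* There exists an infinite symmetric matrix $M=\{m_{i,j}\}_{i,j\in \mathbf{N}}$ such that: (i) every entry $m_{i,j}$ equals $0$ or $1/4$; (ii) the support (set of indices of nonzero entries) of each row and of each column has cardinality $4$; (iii) $I-M$, acting as an operator on $\ell^2(\mathbf{N})$, is invertible on $\ell^2(\mathbf{N})$, but $I-M$, acting as an operator on $\ell^{\infty}(\mathbf{N})$, is not invertible on $\ell^{\infty}(\mathbf{N})$.
   Context: An infinite matrix $M=\{m_{i,j}\}_{i,j\in\mathbf{N}}$ acts on sequences by $(Mf)(i)=\sum_j m_{i,j}f(j)$; since each row and column has finitely many nonzero entries bounded by $1/4$, $M$ defines a bounded operator on $\ell^p(\mathbf{N})$ for every $1\le p\le\infty$. $I$ denotes the identity matrix/operator. *)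

(* Defs.v *)
From Stdlib Require Import Reals Lra.
From Coquelicot Require Import Coquelicot.
Open Scope R_scope.

Definition matrixN := nat -> nat -> R.

(* Action (M f)(i) = sum_j m_{i,j} f(j) (a finite sum when rows have
   finite support; Series is the total infinite-sum operator). *)
Definition mat_apply (M : matrixN) (f : nat -> R) : nat -> R :=
  fun i => Series (fun j => M i j * f j).

Definition I_minus (M : matrixN) (f : nat -> R) : nat -> R :=
  fun i => f i - mat_apply M f i.

Definition in_l2 (f : nat -> R) : Prop := ex_series (fun j => (f j) ^ 2).
Definition in_linf (f : nat -> R) : Prop := exists B, forall j, Rabs (f j) <= B.

Definition invertible_l2 (T : (nat -> R) -> (nat -> R)) : Prop :=
  exists S : (nat -> R) -> (nat -> R),
    (forall f, in_l2 f -> in_l2 (S f)) /\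
    (exists C, forall f, in_l2 f ->
        Series (fun j => (S f j) ^ 2) <= C * Series (fun j => (f j) ^ 2)) /\
    (forall f, in_l2 f -> S (T f) = f) /\
    (forall f, in_l2 f -> T (S f) = f).

Definition invertible_linf (T : (nat -> R) -> (nat -> R)) : Prop :=
  exists S : (nat -> R) -> (nat -> R),
    (forall f, in_linf f -> in_linf (S f)) /\
    (exists C, forall f B, (forall j, Rabs (f j) <= B) ->
        forall i, Rabs (S f i) <= C * B) /\
    (forall f, in_linf f -> S (T f) = f) /\
    (forall f, in_linf f -> T (S f) = f).

Definition support_card4 (P : nat -> Prop) : Prop :=
  exists a b c d : nat,
    a <> b /\ a <> c /\ a <> d /\ b <> c /\ b <> d /\ c <> d /\
    forall j, P j <-> (j = a \/ j = b \/ j = c \/ j = d).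

(* Main.v *)
Require Import Defs.
From Stdlib Require Import Reals.
From Coquelicot Require Import Coquelicot.
Open Scope R_scope.
From Stdlib Require Import Lra Lia List FunctionalExtensionality.
Import ListNotations.

(* Construction: p : N -> N is exactly 3-to-1 with no fixed points and no
   2-cycles; M = (1/4) adjacency of the graph x ~ p x.  M 1 = 1 kills
   l^infty-invertibility; ||M||_{l2} <= sqrt(3/4) gives a Neumann series. *)

Open Scope nat_scope.
Definition par (m:nat) : nat :=
  match m with 0=>1 | 1=>2 | 2=>0 | _ => if Nat.ltb m 9 then (m-3)/2 else m/3 end.
Definition c1 (x:nat) : nat := match x with 0=>2|1=>0|2=>1|_=>3*x end.
Definition c2 (x:nat) : nat := if Nat.ltb x 3 then 3+2*x else 3*x+1.
Definition c3 (x:nat) : nat := if Nat.ltb x 3 then 4+2*x else 3*x+2.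

Lemma div3 j : (3*(j/3) <= j < 3*(j/3)+3)%nat.
Proof. pose proof (Nat.div_mod j 3). pose proof (Nat.mod_upper_bound j 3). lia. Qed.
Lemma par_big m : (9 <= m)%nat -> par m = m/3.
Proof. intros H. do 9 (destruct m as [|m]; [lia|]). reflexivity. Qed.
Lemma c_big x : (3 <= x)%nat -> c1 x = (3*x)%nat /\ c2 x = (3*x+1)%nat /\ c3 x = (3*x+2)%nat.
Proof. intros H. unfold c2, c3. destruct (Nat.ltb_spec x 3); [lia|].
  do 3 (destruct x as [|x]; [lia|]). auto. Qed.
Lemma par_small j : (j < 9)%nat -> par j = nth j [1;2;0;0;0;1;1;2;2]%nat 0%nat.
Proof. intros H. do 9 (destruct j as [|j]; [reflexivity|]). lia. Qed.

Lemma par_spec j x : par j = x <-> (j = c1 x \/ j = c2 x \/ j = c3 x).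
Proof.
  destruct (Nat.ltb_spec x 3) as [Hx|Hx].
  - destruct (Nat.ltb_spec j 9) as [Hj|Hj].
    + do 9 (destruct j as [|j]; [ do 3 (destruct x as [|x]; [unfold c2, c3; simpl; lia|]); lia |]). lia.
    + rewrite par_big by lia.
      assert ((c1 x <= 8 /\ c2 x <= 8 /\ c3 x <= 8)%nat) by
        (do 3 (destruct x as [|x]; [unfold c2, c3; simpl; lia|]); lia).
      pose proof (div3 j). lia.
  - destruct (c_big x Hx) as [-> [-> ->]].
    destruct (Nat.ltb_spec j 9) as [Hj|Hj].
    + rewrite par_small by lia. do 9 (destruct j as [|j]; [unfold c2, c3; simpl; lia|]). lia.
    + rewrite par_big by lia. pose proof (div3 j). lia.
Qed.

Lemma nbr_distinct x :
  par x <> c1 x /\ par x <> c2 x /\ par x <> c3 x /\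
  c1 x <> c2 x /\ c1 x <> c3 x /\ c2 x <> c3 x.
Proof.
  destruct (Nat.ltb_spec x 3) as [Hx|Hx].
  - do 3 (destruct x as [|x]; [unfold c2, c3; simpl; lia|]). lia.
  - destruct (c_big x Hx) as [-> [-> ->]].
    destruct (Nat.ltb_spec x 9).
    + rewrite par_small by lia. do 9 (destruct x as [|x]; [unfold c2, c3; simpl; lia|]); lia.
    + rewrite par_big by lia. pose proof (div3 x). lia.
Qed.

Open Scope R_scope.
Lemma sumC (u : nat -> R) k :
  sum_f_R0 (fun x => u (c1 x) + u (c2 x) + u (c3 x)) (k+2) = sum_f_R0 u (3*(k+2)+2).
Proof.
  induction k.
  - simpl. unfold c2, c3. simpl. ring.
  - replace (S k + 2)%nat with (S (k+2)) by lia.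
    replace (3 * S (k + 2) + 2)%nat with (S (S (S (3*(k+2)+2)))) by lia.
    rewrite tech5, IHk, !tech5.
    destruct (c_big (S (k+2))) as [-> [-> ->]]; [lia|].
    replace (3 * S (k + 2) + 1)%nat with (S (S (3 * (k + 2) + 2))) by lia.
    replace (3 * S (k + 2) + 2)%nat with (S (S (S (3 * (k + 2) + 2)))) by lia.
    replace (3 * S (k + 2))%nat with (S (3 * (k + 2) + 2)) by lia.
    ring.
Qed.
Lemma par_of q r : (3 <= q)%nat -> (r < 3)%nat -> par (3*q+r) = q.
Proof. intros. rewrite par_big by lia. pose proof (div3 (3*q+r)).
  assert (((3*q+r)/3) = q)%nat by lia. exact H2. Qed.
Lemma sumP (u : nat -> R) k :
  sum_f_R0 (fun x => u (par x)) (3*(k+2)+2) = 3 * sum_f_R0 u (k+2).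
Proof.
  induction k.
  - simpl. ring.
  - replace (S k + 2)%nat with (S (k+2)) by lia.
    replace (3 * S (k + 2) + 2)%nat with (S (S (S (3*(k+2)+2)))) by lia.
    rewrite !tech5, IHk.
    replace (S (S (S (3 * (k + 2) + 2)))) with (3 * S (k+2) + 2)%nat by lia.
    replace (S (S (3 * (k + 2) + 2))) with (3 * S (k+2) + 1)%nat by lia.
    replace (S (3 * (k + 2) + 2)) with (3 * S (k+2) + 0)%nat by lia.
    rewrite !par_of by lia. ring.
Qed.

Lemma series_nonneg_bounded (a : nat -> R) (B : R) :
  (forall n, 0 <= a n) -> (forall N, sum_f_R0 a N <= B) ->
  ex_series a /\ Series a <= B.
Proof.
  intros Ha HB.
  destruct (growing_cv (fun N => sum_f_R0 a N)) as [l Hl].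
  - intro n. simpl. specialize (Ha (S n)). lra.
  - exists B. intros x [N ->]. apply HB.
  - assert (Hs : is_series a l) by (apply is_series_Reals; exact Hl).
    split; [exists l; exact Hs|].
    rewrite (is_series_unique _ _ Hs).
    apply is_lim_seq_Reals in Hl.
    assert (H := is_lim_seq_le _ _ l B HB Hl (is_lim_seq_const B)).
    simpl in H. exact H.
Qed.

Lemma partial_le_series (a : nat -> R) N :
  (forall n, 0 <= a n) -> ex_series a -> sum_f_R0 a N <= Series a.
Proof.
  intros Ha Hex.
  apply Series_correct in Hex.
  apply is_series_Reals in Hex.
  apply is_lim_seq_Reals in Hex.
  apply (is_lim_seq_incr_compare _ _ Hex).
  intro n. simpl. specialize (Ha (S n)). lra.
Qed.

Lemma term_le_partial (a : nat -> R) n : (forall n, 0 <= a n) -> a n <= sum_f_R0 a n.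
Proof. intros Ha. destruct n; simpl; [lra|].
  pose proof (cond_pos_sum a n Ha). lra. Qed.

Lemma term_le_series (a : nat -> R) n : (forall n, 0 <= a n) -> ex_series a -> a n <= Series a.
Proof. intros. eapply Rle_trans; [apply term_le_partial; auto| apply partial_le_series; auto]. Qed.

Lemma sum_mono (a : nat -> R) n m : (forall n, 0 <= a n) -> (n <= m)%nat ->
  sum_f_R0 a n <= sum_f_R0 a m.
Proof. intros Ha H. induction H; [lra|]. simpl. specialize (Ha (S m)). lra. Qed.

Lemma sum_lin (a b : nat -> R) al be N :
  sum_f_R0 (fun i => al * a i + be * b i) N = al * sum_f_R0 a N + be * sum_f_R0 b N.
Proof. induction N; simpl; [ring|]. rewrite IHN. ring. Qed.

Definition Aop (f : nat -> R) (x : nat) : R :=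
  (f (par x) + f (c1 x) + f (c2 x) + f (c3 x)) / 4.

Lemma Aop_ext f g : (forall y, f y = g y) -> forall x, Aop f x = Aop g x.
Proof. intros H x. unfold Aop. rewrite !H. reflexivity. Qed.

Lemma Aop_sq f x : (Aop f x) ^ 2 <=
  (2 * (f (par x))^2 + 6 * ((f (c1 x))^2 + (f (c2 x))^2 + (f (c3 x))^2)) / 16.
Proof.
  unfold Aop. set (a := f (par x)). set (b := f (c1 x)). set (c := f (c2 x)). set (d := f (c3 x)).
  pose proof (pow2_ge_0 (a - (b+c+d))). pose proof (pow2_ge_0 (b-c)).
  pose proof (pow2_ge_0 (c-d)). pose proof (pow2_ge_0 (b-d)).
  nra.
Qed.

Lemma Aop_l2 f : ex_series (fun j => f j ^ 2) ->
  ex_series (fun j => Aop f j ^ 2) /\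
  Series (fun j => Aop f j ^ 2) <= 3/4 * Series (fun j => f j ^ 2).
Proof.
  intros Hf. set (u := fun j => f j ^ 2).
  assert (Hu : forall n, 0 <= u n) by (intro; apply pow2_ge_0).
  set (F := Series u).
  apply series_nonneg_bounded; [intro; apply pow2_ge_0|].
  intro N.
  set (h := fun x => (2 * u (par x) + 6 * (u (c1 x) + u (c2 x) + u (c3 x))) / 16).
  assert (Hh : forall x, 0 <= h x).
  { intro x. unfold h. pose proof (Hu (par x)). pose proof (Hu (c1 x)).
    pose proof (Hu (c2 x)). pose proof (Hu (c3 x)). lra. }
  apply Rle_trans with (sum_f_R0 h N).
  { apply sum_Rle. intros n _. apply Aop_sq. }
  apply Rle_trans with (sum_f_R0 h (N+2)).
  { apply sum_mono; auto; lia. }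
  assert (E : sum_f_R0 h (N+2) =
     2/16 * sum_f_R0 (fun x => u (par x)) (N+2) +
     6/16 * sum_f_R0 (fun x => u (c1 x) + u (c2 x) + u (c3 x)) (N+2)).
  { rewrite <- sum_lin. apply sum_eq. intros. unfold h. field. }
  rewrite E, sumC.
  assert (H1 : sum_f_R0 (fun x => u (par x)) (N+2) <= 3 * F).
  { apply Rle_trans with (sum_f_R0 (fun x => u (par x)) (3*(N+2)+2)).
    { apply sum_mono; [intro; apply Hu| lia]. }
    rewrite sumP. pose proof (partial_le_series u (N+2) Hu Hf). unfold F. lra. }
  assert (H2 : sum_f_R0 u (3*(N+2)+2) <= F) by (apply partial_le_series; auto).
  unfold F in *. lra.
Qed.

Fixpoint Ak (k : nat) (f : nat -> R) : nat -> R :=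
  match k with 0%nat => f | S k => Aop (Ak k f) end.

Lemma Ak_l2 f k : ex_series (fun j => f j ^ 2) ->
  ex_series (fun j => Ak k f j ^ 2) /\
  Series (fun j => Ak k f j ^ 2) <= (3/4)^k * Series (fun j => f j ^ 2).
Proof.
  intros Hf. induction k as [|k [IH1 IH2]]; cbn [Ak].
  - split; [exact Hf| lra].
  - destruct (Aop_l2 (Ak k f) IH1) as [H1 H2]. split; [exact H1|].
    eapply Rle_trans; [exact H2|].
    apply Rle_trans with (3/4 * ((3/4)^k * Series (fun j => f j ^ 2))).
    + apply Rmult_le_compat_l; lra.
    + right. rewrite <- tech_pow_Rmult. ring.
Qed.


Lemma Ak_pt f k x : ex_series (fun j => f j ^ 2) ->
  Rabs (Ak k f x) <= ((6/7)^k * Series (fun j => f j ^ 2) + (7/8)^k) / 2.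
Proof.
  intros Hf. destruct (Ak_l2 f k Hf) as [H1 H2].
  set (F := Series (fun j => f j ^ 2)) in *.
  set (a := Ak k f x).
  assert (Ha2 : a ^ 2 <= (3/4)^k * F).
  { eapply Rle_trans; [| exact H2]. apply (term_le_series (fun j => Ak k f j ^ 2) x); auto.
    intro; apply pow2_ge_0. }
  set (r := (7/8)^k).
  assert (Hr : 0 < r) by (apply pow_lt; lra).
  assert (E : (3/4)^k = (6/7)^k * r).
  { unfold r. rewrite <- Rpow_mult_distr. f_equal. field. }
  rewrite E in Ha2.
  assert (Habs : Rabs a ^ 2 = a ^ 2) by (apply pow2_abs).
  pose proof (pow2_ge_0 (Rabs a - r)).
  apply Rmult_le_reg_r with (2 * r); [lra|].
  nra.
Qed.

Lemma geom_ex q : 0 <= q < 1 -> ex_series (fun k => q ^ k).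
Proof. intros. apply ex_series_geom. rewrite Rabs_pos_eq; lra. Qed.

Lemma bound_ex F : ex_series (fun k => ((6/7)^k * F + (7/8)^k) / 2).
Proof.
  apply ex_series_ext with (fun k => plus ((6/7)^k * (F/2)) ((7/8)^k * (1/2))).
  { intro. unfold plus; simpl. field. }
  apply (@ex_series_plus _ _ (fun k => (6/7)^k*(F/2)) (fun k => (7/8)^k*(1/2))); apply ex_series_scal_r; apply geom_ex; lra.
Qed.

Definition Sop (f : nat -> R) (x : nat) : R := Series (fun k => Ak k f x).

Lemma Sop_ex f x : ex_series (fun j => f j ^ 2) -> ex_series (fun k => Ak k f x).
Proof.
  intros Hf. apply (@ex_series_le R_AbsRing R_CompleteNormedModule (fun k => Ak k f x) (fun k => ((6/7)^k * Series (fun j => f j ^ 2) + (7/8)^k) / 2)).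
  - intro k. apply Ak_pt; auto.
  - apply bound_ex.
Qed.

Lemma Ak_lin f g k x : Ak k (fun y => f y - g y) x = Ak k f x - Ak k g x.
Proof.
  revert x. induction k; intro x; cbn [Ak]; [reflexivity|].
  unfold Aop. rewrite !IHk. field.
Qed.

Lemma Ak_shift f k x : Ak k (Aop f) x = Ak (S k) f x.
Proof.
  revert x. induction k; intro x; [reflexivity|].
  cbn [Ak]. apply Aop_ext. intro y. rewrite IHk. reflexivity.
Qed.

Lemma telescope (a : nat -> R) : is_lim_seq a 0 ->
  Series (fun k => a k - a (S k)) = a 0%nat.
Proof.
  intros Ha. apply is_series_unique. apply is_series_Reals. apply is_lim_seq_Reals.
  assert (E : forall n, sum_f_R0 (fun k => a k - a (S k)) n = a 0%nat - a (S n)).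
  { induction n; simpl; [ring|]. rewrite IHn. ring. }
  apply is_lim_seq_ext with (fun n => a 0%nat - a (S n)); [intro; rewrite E; reflexivity|].
  assert (H : is_lim_seq (fun n => a 0%nat - a (S n)) (a 0%nat - 0)).
  { apply is_lim_seq_minus'; [apply is_lim_seq_const|].
    apply is_lim_seq_incr_1 in Ha. exact Ha. }
  rewrite Rminus_0_r in H. exact H.
Qed.

Lemma S_T f x : ex_series (fun j => f j ^ 2) ->
  Sop (fun y => f y - Aop f y) x = f x.
Proof.
  intros Hf. unfold Sop.
  rewrite (Series_ext _ (fun k => Ak k f x - Ak (S k) f x)).
  2:{ intro k. rewrite Ak_lin, Ak_shift. reflexivity. }
  apply telescope. apply ex_series_lim_0. apply Sop_ex; auto.
Qed.

Lemma is_series_extR (a b : nat -> R) l : (forall n, a n = b n) -> is_series a l -> is_series b l.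
Proof. apply is_series_ext. Qed.

Lemma is_series_plusR (a b : nat -> R) la lb : is_series a la -> is_series b lb ->
  is_series (fun n => a n + b n) (la + lb).
Proof. intros. apply (is_series_plus a b la lb); auto. Qed.

Lemma T_S f x : ex_series (fun j => f j ^ 2) ->
  Sop f x - Aop (Sop f) x = f x.
Proof.
  intros Hf.
  assert (H : is_series (fun k => Ak (S k) f x) (Aop (Sop f) x)).
  {
    apply is_series_extR with (fun k => (Ak k f (par x) + Ak k f (c1 x) + Ak k f (c2 x) + Ak k f (c3 x)) * /4).
    { intro k. cbn [Ak]. unfold Aop. field. }
    replace (Aop (Sop f) x) with ((Sop f (par x) + Sop f (c1 x) + Sop f (c2 x) + Sop f (c3 x)) * /4) by (unfold Aop; field).
    apply is_series_scal_r.
    repeat apply is_series_plusR; apply Series_correct, Sop_ex; auto. }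
  unfold Sop at 1. rewrite Series_incr_1 by (apply Sop_ex; auto).
  rewrite (is_series_unique _ _ H). cbn [Ak]. ring.
Qed.

Lemma ex_series_plusR (a b : nat -> R) : ex_series a -> ex_series b -> ex_series (fun n => a n + b n).
Proof. intros. apply (ex_series_plus a b); auto. Qed.

Lemma ex_series_leR (a b : nat -> R) : (forall n, Rabs (a n) <= b n) -> ex_series b -> ex_series a.
Proof. intros. apply (@ex_series_le R_AbsRing R_CompleteNormedModule a b); auto. Qed.

Lemma swap_sum (b : nat -> nat -> R) N : (forall x, ex_series (b x)) ->
  ex_series (fun k => sum_f_R0 (fun x => b x k) N) /\
  sum_f_R0 (fun x => Series (b x)) N = Series (fun k => sum_f_R0 (fun x => b x k) N).
Proof.
  intros Hb. induction N as [|N [IH1 IH2]]; simpl.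
  - split; [apply Hb| reflexivity].
  - split; [apply ex_series_plusR; auto|].
    rewrite Series_plus; auto. rewrite IH2. reflexivity.
Qed.

Lemma CS (a w : nat -> R) : (forall k, 0 < w k) -> ex_series w ->
  ex_series (fun k => a k ^ 2 / w k) ->
  (Series a) ^ 2 <= Series w * Series (fun k => a k ^ 2 / w k).
Proof.
  intros Hw Hwe Hq.
  set (W := Series w). set (Q := Series (fun k => a k ^ 2 / w k)).
  assert (Hb : forall l, 0 < l -> ex_series (fun k => (l * w k + (a k ^ 2 / w k) / l) / 2)
      /\ Series (fun k => (l * w k + (a k ^ 2 / w k) / l) / 2) = (l * W + Q / l) / 2).
  { intros l Hl.
    assert (H : is_series (fun k => (l * w k + (a k ^ 2 / w k) / l) / 2) ((W * l + Q * /l) * /2)).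
    { apply is_series_extR with (fun k => (w k * l + (a k ^ 2 / w k) * / l) * /2).
      { intro n; specialize (Hw n); field; repeat split; lra. }
      apply is_series_scal_r. apply is_series_plusR; apply is_series_scal_r; apply Series_correct; auto. }
    split; [eexists; exact H|]. rewrite (is_series_unique _ _ H). field; lra. }
  assert (Hpt : forall l, 0 < l -> forall k, Rabs (a k) <= (l * w k + (a k ^ 2 / w k) / l) / 2).
  { intros l Hl k. specialize (Hw k).
    pose proof (pow2_ge_0 (Rabs (a k) - l * w k)). pose proof (pow2_abs (a k)).
    apply Rmult_le_reg_r with (2 * l * w k); [apply Rmult_lt_0_compat; lra|].
    replace ((l * w k + a k ^ 2 / w k / l) / 2 * (2 * l * w k)) with ((l * w k)^2 + a k ^ 2) by (field; lra).
    nra. }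
  assert (Hmain : forall l, 0 < l -> Rabs (Series a) <= (l * W + Q / l) / 2).
  { intros l Hl. destruct (Hb l Hl) as [He Hs].
    assert (Hae : ex_series (fun k => Rabs (a k))).
    { apply ex_series_leR with (fun k => (l * w k + (a k ^ 2 / w k) / l) / 2); auto.
      intro. rewrite Rabs_Rabsolu. apply Hpt; auto. }
    eapply Rle_trans; [apply Series_Rabs; auto|]. rewrite <- Hs.
    apply Series_le; auto. intro n. split; [apply Rabs_pos| apply Hpt; auto]. }
  assert (HW : 0 < W).
  { apply Rlt_le_trans with (w 0%nat); [auto|]. apply (term_le_series w 0); auto.
    intro; left; auto. }
  assert (HQ : 0 <= Q).
  { unfold Q. apply Rle_trans with (sum_f_R0 (fun k => a k ^ 2 / w k) 0).
    - simpl. specialize (Hw 0%nat). apply Rmult_le_pos; [apply pow2_ge_0| left; apply Rinv_0_lt_compat; auto].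
    - apply partial_le_series; auto. intro n. specialize (Hw n).
      apply Rmult_le_pos; [apply pow2_ge_0| left; apply Rinv_0_lt_compat; auto]. }
  rewrite <- pow2_abs. set (s := Rabs (Series a)).
  assert (Hs0 : 0 <= s) by apply Rabs_pos.
  destruct (Req_dec s 0) as [E|E].
  - rewrite E. nra.
  - assert (Hl : 0 < s / W) by (apply Rdiv_lt_0_compat; lra).
    specialize (Hmain _ Hl). fold s in Hmain.
    replace (s / W * W) with s in Hmain by (field; lra).
    replace (Q / (s / W)) with (Q * W / s) in Hmain by (field; lra).
    apply Rmult_le_reg_r with (/ s); [apply Rinv_0_lt_compat; lra|].
    replace (s ^ 2 * / s) with s by (field; lra).
    replace (W * Q * / s) with (Q * W / s) by (field; lra).
    lra.
Qed.

Lemma sum_scal (g : nat -> R) c N : sum_f_R0 (fun i => g i * c) N = sum_f_R0 g N * c.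
Proof. induction N; simpl; [ring|]. rewrite IHN. ring. Qed.

Lemma Sop_l2 f : ex_series (fun j => f j ^ 2) ->
  ex_series (fun j => Sop f j ^ 2) /\
  Series (fun j => Sop f j ^ 2) <= 56 * Series (fun j => f j ^ 2).
Proof.
  intros Hf. set (F := Series (fun j => f j ^ 2)).
  assert (HF : 0 <= F).
  { apply Rle_trans with (sum_f_R0 (fun j => f j ^ 2) 0); [simpl; apply pow2_ge_0|].
    apply partial_le_series; auto. intro; apply pow2_ge_0. }
  set (q := fun x k => Ak k f x ^ 2 * / (7/8)^k).
  assert (Er : forall k, (3/4)^k = (6/7)^k * (7/8)^k).
  { intro k. rewrite <- Rpow_mult_distr. f_equal. field. }
  assert (Hr : forall k, 0 < (7/8)^k) by (intro; apply pow_lt; lra).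
  assert (Hsumq : forall k N, 0 <= sum_f_R0 (fun x => q x k) N <= (6/7)^k * F).
  { intros k N. unfold q. rewrite sum_scal. destruct (Ak_l2 f k Hf) as [H1 H2].
    assert (H0 : forall n, 0 <= Ak k f n ^ 2) by (intro; apply pow2_ge_0).
    pose proof (partial_le_series _ N H0 H1).
    pose proof (cond_pos_sum _ N H0). specialize (Hr k).
    pose proof (Rinv_0_lt_compat _ Hr).
    split; [apply Rmult_le_pos; lra|].
    apply Rmult_le_reg_r with ((7/8)^k); [auto|].
    rewrite Rmult_assoc, Rinv_l by lra. rewrite Rmult_1_r.
    rewrite (Rmult_comm ((6/7)^k) F), Rmult_assoc, <- Er. fold F in H2. lra. }
  assert (Hq : forall x k, 0 <= q x k <= (6/7)^k * F).
  { intros x k. pose proof (Hsumq k x). split.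
    - unfold q. apply Rmult_le_pos; [apply pow2_ge_0| left; apply Rinv_0_lt_compat; auto].
    - eapply Rle_trans; [|apply Hsumq]. apply (term_le_partial (fun x => q x k)).
      intro; unfold q; apply Rmult_le_pos; [apply pow2_ge_0| left; apply Rinv_0_lt_compat; auto]. }
  assert (Hge : ex_series (fun k => (6/7)^k * F)).
  { apply ex_series_ext with (fun k => (6/7)^k * F); [reflexivity|].
    apply ex_series_scal_r. apply geom_ex; lra. }
  assert (Hqe : forall x, ex_series (q x)).
  { intro x. apply ex_series_leR with (fun k => (6/7)^k * F); auto.
    intro k. rewrite Rabs_pos_eq; apply Hq. }
  assert (HW : Series (fun k => (7/8)^k) = 8).
  { rewrite Series_geom; [field| rewrite Rabs_pos_eq; lra]. }
  assert (Hpt : forall x, Sop f x ^ 2 <= 8 * Series (q x)).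
  { intro x. rewrite <- HW. unfold Sop. apply CS; auto. apply geom_ex; lra.
    apply Hqe. }
  apply series_nonneg_bounded; [intro; apply pow2_ge_0|].
  intro N.
  apply Rle_trans with (sum_f_R0 (fun x => Series (q x) * 8) N).
  { apply sum_Rle. intros. rewrite Rmult_comm. apply Hpt. }
  rewrite sum_scal.
  destruct (swap_sum q N Hqe) as [He Es]. rewrite Es.
  apply Rle_trans with (Series (fun k => (6/7)^k * F) * 8).
  { apply Rmult_le_compat_r; [lra|]. apply Series_le; auto. }
  rewrite Series_scal_r, Series_geom by (rewrite Rabs_pos_eq; lra).
  replace (/ (1 - 6/7)) with 7 by field. lra.
Qed.

Definition Mx : matrixN := fun i j =>
  if (Nat.eqb (par i) j || Nat.eqb (par j) i)%bool then 1/4 else 0.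

Lemma M_one i j : (j = par i \/ j = c1 i \/ j = c2 i \/ j = c3 i) -> Mx i j = 1/4.
Proof.
  intros H. unfold Mx. destruct H as [->|H].
  - rewrite Nat.eqb_refl. reflexivity.
  - apply par_spec in H. rewrite H, Nat.eqb_refl, Bool.orb_true_r. reflexivity.
Qed.

Lemma M_zero i j : ~ (j = par i \/ j = c1 i \/ j = c2 i \/ j = c3 i) -> Mx i j = 0.
Proof.
  intros H. unfold Mx.
  destruct (Nat.eqb_spec (par i) j); [exfalso; apply H; auto|].
  destruct (Nat.eqb_spec (par j) i); [exfalso; apply H; right; apply par_spec; auto|].
  reflexivity.
Qed.

Lemma M_nz i j : Mx i j <> 0 <-> (j = par i \/ j = c1 i \/ j = c2 i \/ j = c3 i).
Proof.
  split.
  - intros H. destruct (Classical_Prop.classic (j = par i \/ j = c1 i \/ j = c2 i \/ j = c3 i)); auto.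
    exfalso. apply H. apply M_zero; auto.
  - intros H. rewrite M_one; auto. lra.
Qed.

Lemma M_sym i j : Mx i j = Mx j i.
Proof. unfold Mx. rewrite Bool.orb_comm. reflexivity. Qed.

Lemma delta_sum a v n : sum_f_R0 (fun j => if Nat.eqb j a then v else 0) n = if Nat.ltb n a then 0 else v.
Proof.
  induction n.
  - destruct a; reflexivity.
  - rewrite tech5, IHn.
    destruct (Nat.ltb_spec n a), (Nat.eqb_spec (S n) a), (Nat.ltb_spec (S n) a); try lia; ring.
Qed.

Lemma delta_series a v : is_series (fun j => if Nat.eqb j a then v else 0) v.
Proof.
  apply is_series_Reals. apply is_lim_seq_Reals.
  apply is_lim_seq_ext_loc with (fun _ => v); [|apply is_lim_seq_const].
  exists a. intros n Hn. rewrite delta_sum.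
  destruct (Nat.ltb_spec n a); [lia| reflexivity].
Qed.

Lemma mat_apply_A f x : mat_apply Mx f x = Aop f x.
Proof.
  unfold mat_apply. apply is_series_unique.
  set (d := fun a v (j : nat) => if Nat.eqb j a then v else 0).
  apply is_series_extR with (fun j => d (par x) (f (par x) / 4) j + d (c1 x) (f (c1 x) / 4) j
      + d (c2 x) (f (c2 x) / 4) j + d (c3 x) (f (c3 x) / 4) j).
  2:{ replace (Aop f x) with (f (par x) / 4 + f (c1 x) / 4 + f (c2 x) / 4 + f (c3 x) / 4)
        by (unfold Aop; field).
      repeat apply is_series_plusR; apply delta_series. }
  intro j. unfold d. pose proof (nbr_distinct x) as Hd.
  destruct (Nat.eqb_spec j (par x)); destruct (Nat.eqb_spec j (c1 x));
  destruct (Nat.eqb_spec j (c2 x)); destruct (Nat.eqb_spec j (c3 x));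
  subst; try (exfalso; lia).
  all: try (rewrite M_one by tauto; field).
  rewrite M_zero by tauto. ring.
Qed.

Lemma T_eq f : I_minus Mx f = fun i => f i - Aop f i.
Proof. apply functional_extensionality. intro i. unfold I_minus. rewrite mat_apply_A. reflexivity. Qed.

Lemma row_card i : support_card4 (fun j => Mx i j <> 0).
Proof.
  destruct (nbr_distinct i) as (H1 & H2 & H3 & H4 & H5 & H6).
  exists (par i), (c1 i), (c2 i), (c3 i).
  repeat split; auto; intros; apply M_nz; auto.
Qed.

Theorem mainTheorem1 :
  exists M : matrixN,
    (forall i j, M i j = M j i) /\
    (forall i j, M i j = 0 \/ M i j = 1 / 4) /\
    (forall i, support_card4 (fun j => M i j <> 0)) /\
    (forall j, support_card4 (fun i => M i j <> 0)) /\
    invertible_l2 (I_minus M) /\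
    ~ invertible_linf (I_minus M).
Proof.
  exists Mx. split; [apply M_sym|]. split.
  { intros i j. unfold Mx. destruct (_ || _)%bool; auto. }
  split; [apply row_card|]. split.
  { intro j. destruct (row_card j) as (a & b & c & d & H1 & H2 & H3 & H4 & H5 & H6 & H).
    exists a, b, c, d. do 6 (split; [assumption|]). intro i. rewrite M_sym. apply H. }
  split.
  - exists Sop. split; [|split; [|split]].
    + intros f Hf. apply Sop_l2; auto.
    + exists 56. intros f Hf. apply Sop_l2; auto.
    + intros f Hf. rewrite T_eq. apply functional_extensionality. intro x. apply S_T; auto.
    + intros f Hf. rewrite T_eq. apply functional_extensionality. intro x. apply T_S; auto.
  - intros (S & _ & _ & H & _).
    assert (E1 : I_minus Mx (fun _ => 1) = fun _ => 0).
    { rewrite T_eq. apply functional_extensionality. intro. unfold Aop. field. }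
    assert (E0 : I_minus Mx (fun _ => 0) = fun _ => 0).
    { rewrite T_eq. apply functional_extensionality. intro. unfold Aop. field. }
    assert (L1 : in_linf (fun _ => 1)) by (exists 1; intro; rewrite Rabs_R1; lra).
    assert (L0 : in_linf (fun _ => 0)) by (exists 0; intro; rewrite Rabs_R0; lra).
    pose proof (H _ L1) as A1. pose proof (H _ L0) as A0.
    rewrite E1 in A1. rewrite E0 in A0. rewrite A1 in A0.
    pose proof (f_equal (fun g => g 0%nat) A0). simpl in H0. lra.
Qed.
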